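(* Let $\langle X_n, \pi^{n+1}_n : n\in\omega\rangle$ be an inverse system, let $X = X_\omega = \varprojlim_n X_n$ with projections $\pi^\omega_n : X\to X_n$, and for $m\le n<\omega$ let $\pi^n_m = \pi^{m+1}_m\circ\cdots\circ\pi^{n}_{n-1} : X_n\to X_m$ (with $\pi^n_n$ the identity). Let $p\in X$ and put $p_n = \pi^\omega_n(p)\in X_n$. Suppose: (A) for each $n$, $p_n$ is a weak $P_{\aleph_n}$-point in $X_n$; (B) for each $n$, $w(X_n) < \aleph_\omega$; (C) for each $n$, $(\pi^n_0)^{-1}(\{p_0\})$ is nowhere dense in $X_n$. Then $X$ is compact Hausdorff, $\chi(p,X) = w(X) = \aleph_\omega$, and for every regular cardinal $\kappa>\omega$ no $\kappa$-sequence of points of $X\setminus\{p\}$ converges to $p$.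
   Context: An inverse system is a sequence $\langle X_n, \pi^{n+1}_n : n\in\omega\rangle$ where each $X_n$ is a compact Hausdorff space and each $\pi^{n+1}_n$ is a continuous map from $X_{n+1}$ onto $X_n$; its inverse limit is $\{(x_n)_n\in\prod_n X_n : \pi^{n+1}_n(x_{n+1}) = x_n \text{ for all } n\}$ with the subspace product topology, and $\pi^\omega_n$ is the $n$-th coordinate projection. A point $y\in Y$ is a weak $P_\kappa$-point of $Y$ if $y$ is not in the closure of any subset of $Y\setminus\{y\}$ of cardinality less than $\kappa$ (trivial for $\kappa=\aleph_0$). $\chi(p,X)$ is the least size of a local base at $p$, $w(X)$ the least size of a base. A $\kappa$-sequence converges to $p$ if every neighborhood of $p$ contains a tail of it. *)

(* Defs.v *)
From HB Require Import structures.
From mathcomp Require Import all_boot all_order all_algebra.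
From mathcomp Require Import all_classical all_reals all_analysis.

Set Implicit Arguments.
Unset Strict Implicit.
Unset Printing Implicit Defensive.

Local Open Scope classical_set_scope.
Local Open Scope card_scope.

Definition strict_wellorder {T : Type} (S : set T) (lt : T -> T -> Prop) :=
  [/\ (forall x, S x -> ~ lt x x),
      (forall x y z, S x -> S y -> S z -> lt x y -> lt y z -> lt x z),
      (forall x y, S x -> S y -> [\/ x = y, lt x y | lt y x]) &
      (forall A : set T, A `<=` S -> A !=set0 ->
         exists2 m, A m & forall a, A a -> ~ lt a m)].

Definition segment {T : Type} (S : set T) (lt : T -> T -> Prop) (x : T) :=
  [set y | S y /\ lt y x].

(* le_aleph n S  <->  |S| <= aleph_n.
   |S| <= aleph_0 iff S countable;
   |S| <= aleph_(n+1) iff S admits a well-order all of whose proper initial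
   segments have cardinality <= aleph_n (i.e. order type <= omega_(n+1)). *)
Fixpoint le_aleph (n : nat) : forall T : Type, set T -> Prop :=
  match n with
  | 0 => fun T S => countable S
  | n'.+1 => fun T S => exists lt : T -> T -> Prop,
      strict_wellorder S lt /\ forall x, S x -> le_aleph n' (segment S lt x)
  end.

Definition lt_aleph (n : nat) {T : Type} (S : set T) : Prop :=
  match n with
  | 0 => finite_set S
  | n'.+1 => le_aleph n' S
  end.

Definition lt_aleph_omega {T : Type} (S : set T) : Prop :=
  exists n, le_aleph n S.

(* |S| <= aleph_omega : S admits a well-order all of whose proper initial
   segments have cardinality < aleph_omega (order type <= omega_omega). *)
Definition le_aleph_omega {T : Type} (S : set T) : Prop :=
  exists lt : T -> T -> Prop,
    strict_wellorder S lt /\ forall x, S x -> lt_aleph_omega (segment S lt x).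

Definition card_is_aleph_omega {T : Type} (S : set T) : Prop :=
  le_aleph_omega S /\ ~ lt_aleph_omega S.

(* A (well-ordered type representing a) regular cardinal kappa > omega:
   [lt] well-orders K, K is uncountable, K is an initial ordinal (every proper
   initial segment has smaller cardinality) and K is regular (every cofinal
   subset has cardinality |K|). *)
Definition regular_uncountable_cardinal {K : Type} (lt : K -> K -> Prop) :=
  [/\ strict_wellorder [set: K] lt,
      ~ countable [set: K],
      (forall k : K, ~ ([set: K] #<= [set j | lt j k])) &
      (forall A : set K, (forall k, exists2 a, A a & ~ lt a k) ->
          [set: K] #<= A)].

Definition weak_P_aleph_point {Y : topologicalType} (n : nat) (y : Y) :=
  forall A : set Y, A `<=` ~` [set y] -> lt_aleph n A -> ~ closure A y.

Definition local_base {Y : topologicalType} (p : Y) (B : set (set Y)) :=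
  B `<=` open_nbhs p /\ forall U, nbhs p U -> exists2 V, B V & V `<=` U.

Definition character_is_aleph_omega {Y : topologicalType} (p : Y) :=
  (exists2 B, local_base p B & le_aleph_omega B) /\
  (forall B, local_base p B -> ~ lt_aleph_omega B).

Definition weight_lt_aleph_omega (Y : topologicalType) :=
  exists2 B : set (set Y), basis B & lt_aleph_omega B.

Definition weight_is_aleph_omega (Y : topologicalType) :=
  (exists2 B : set (set Y), basis B & le_aleph_omega B) /\
  (forall B : set (set Y), basis B -> ~ lt_aleph_omega B).

Definition nowhere_dense {Y : topologicalType} (A : set Y) :=
  interior (closure A) = set0.

Definition wo_seq_converges {K : Type} (lt : K -> K -> Prop)
    {Y : topologicalType} (f : K -> Y) (p : Y) :=
  forall U, nbhs p U -> exists k0 : K, forall k, ~ lt k k0 -> U (f k).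

Definition invlim_set (X : nat -> topologicalType)
    (pi : forall n, X n.+1 -> X n) : set (prod_topology X) :=
  [set x | forall n, pi n (x n.+1) = x n].

Definition invlim (X : nat -> topologicalType)
    (pi : forall n, X n.+1 -> X n) : topologicalType :=
  set_type (invlim_set pi).

Definition invlim_proj (X : nat -> topologicalType)
    (pi : forall n, X n.+1 -> X n) (n : nat) (x : invlim pi) : X n :=
  (set_val x : prod_topology X) n.

Fixpoint bond0 (X : nat -> topologicalType) (pi : forall n, X n.+1 -> X n)
    (n : nat) : X n -> X 0 :=
  match n with
  | 0 => fun x => x
  | n'.+1 => fun x => @bond0 X pi n' (pi n' x)
  end.
Arguments bond0 {X} pi n _.

(* Main.v *)
Require Import Defs.
From HB Require Import structures.
From mathcomp Require Import all_boot all_order all_algebra.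
From mathcomp Require Import all_classical all_reals all_analysis.

Set Implicit Arguments.
Unset Strict Implicit.
Unset Printing Implicit Defensive.
Local Open Scope classical_set_scope.
Local Open Scope card_scope.
Lemma wo_sub T (S S' : set T) (lt : T -> T -> Prop) :
  S' `<=` S -> strict_wellorder S lt -> strict_wellorder S' lt.
Proof.
move=> sub [h1 h2 h3 h4]; split.
- by move=> x /sub; apply: h1.
- by move=> x y z /sub ? /sub ? /sub ?; apply: h2.
- by move=> x y /sub ? /sub ?; apply: h3.
- by move=> A AS' A0; apply: h4 => // a /AS' /sub.
Qed.

Lemma seg_sub T (S S' : set T) lt x :
  S' `<=` S -> segment S' lt x `<=` segment S lt x.
Proof. by move=> sub y [/sub ? ?]; split. Qed.

Lemma le_aleph_sub n : forall T (S S' : set T),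
  S' `<=` S -> le_aleph n S -> le_aleph n S'.
Proof.
elim: n => [|n IH] T S S' sub /=.
  by apply: sub_countable; apply: subset_card_le.
case=> lt [wo hs]; exists lt; split; first exact: wo_sub wo.
move=> x S'x; apply: (IH _ (segment S lt x)); first exact: seg_sub.
exact: hs (sub _ S'x).
Qed.
Arguments le_aleph_sub {n T S S'}.

Lemma le_aleph_set0 n T : le_aleph n (@set0 T).
Proof.
case: n => [|n] /=; first exact: countable0.
exists (fun _ _ => False); split => //; split => //.
by move=> A A0 [a /A0].
Qed.

Lemma wo_image T U (S : set T) lt (f : T -> U) : strict_wellorder S lt ->
  exists lt', strict_wellorder (f @` S) lt' /\
    forall y, (f @` S) y ->
      exists2 x, S x & segment (f @` S) lt' y `<=` f @` segment S lt x.
Proof.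
move=> [h1 h2 h3 h4].
have [[x0 Sx0]|S0] := pselect (exists x, S x); last first.
  exists (fun _ _ => False); split.
    split.
    - by move=> *.
    - by move=> *.
    - by move=> x y [z Sz _]; exfalso; apply: S0; exists z.
    - by move=> A AS [a /AS [z Sz _]]; exfalso; apply: S0; exists z.
  by move=> y [z Sz _]; exfalso; apply: S0; exists z.
pose r y := match pselect (exists x, S x /\ f x = y) with
  | left h => proj1_sig (cid h) | right _ => x0 end.
have rP y : (f @` S) y -> S (r y) /\ f (r y) = y.
  move=> [z Sz fz]; rewrite /r; case: pselect => [h|nh].
    exact: (proj2_sig (cid h)).
  by exfalso; apply: nh; exists z.
exists (fun y1 y2 => lt (r y1) (r y2)); split; last first.
  move=> y Hy; exists (r y); first by case: (rP y Hy).
  move=> y' [Hy' lty']; exists (r y'); last by case: (rP y' Hy').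
  by split => //; case: (rP y' Hy').
split.
- by move=> y /rP [Sr _]; apply: h1.
- by move=> x y z /rP[? _] /rP[? _] /rP[? _]; apply: h2.
- move=> x y Hx Hy; have [Sx fx] := rP x Hx; have [Sy fy] := rP y Hy.
  case: (h3 _ _ Sx Sy) => [e|l|l]; [apply: Or31|apply: Or32|apply: Or33] => //.
  by rewrite -fx -fy e.
- move=> A AS [a0 Aa0].
  have AS' : r @` A `<=` S by move=> _ [a /AS /rP [Sa _] <-].
  have An : r @` A !=set0 by exists (r a0); exists a0.
  have [m [a Aa <-] mmin] := h4 _ AS' An.
  by exists a => // a' Aa'; apply: mmin; exists a'.
Qed.

Lemma le_aleph_image n : forall T U (S : set T) (f : T -> U),
  le_aleph n S -> le_aleph n (f @` S).
Proof.
elim: n => [|n IH] T U S f /=.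
  by apply: sub_countable; apply: card_image_le.
case=> lt [wo hs]; have [lt' [wo' hseg]] := wo_image f wo.
exists lt'; split => // y Hy; have [x Sx sub] := hseg y Hy.
exact: (le_aleph_sub sub (IH _ _ _ f (hs x Sx))).
Qed.
Arguments le_aleph_image {n T U S} f.

Lemma nat_min (P : nat -> Prop) : (exists n, P n) ->
  exists m, P m /\ forall k, P k -> (m <= k)%N.
Proof.
move=> ex; have ex' : exists n, `[< P n >] by case: ex => n Pn; exists n; apply/asboolP.
case: (ex_minnP ex') => m /asboolP Pm mmin; exists m; split=> // k Pk.
by apply: mmin; apply/asboolP.
Qed.

Lemma countable_wo T (S : set T) : countable S -> exists lt, strict_wellorder S lt.
Proof.
move=> /countable_injP [g ginj].
exists (fun x y => (g x < g y)%N); split.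
- by move=> x _; rewrite ltnn.
- by move=> x y z _ _ _; apply: ltn_trans.
- move=> x y Sx Sy; case: (ltngtP (g x) (g y)) => h; [apply: Or32|apply: Or33|apply: Or31] => //.
  by apply: ginj => //; apply: mem_set.
- move=> A AS [a0 Aa0].
  have [m [[a [Aa ga]] mmin]] := @nat_min (fun n => exists a, A a /\ g a = n) (ex_intro _ (g a0) (ex_intro _ a0 (conj Aa0 erefl))).
  exists a => // a' Aa'; apply/negP; rewrite -leqNgt ga; apply: mmin; by exists a'.
Qed.

Lemma le_aleph_succ n : forall T (S : set T), le_aleph n S -> le_aleph n.+1 S.
Proof.
elim: n => [|n IH] T S /=.
  move=> cS; have [lt wo] := countable_wo cS; exists lt; split => // x _.
  by apply: sub_countable cS; apply: subset_card_le => y [].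
by case=> lt [wo hs]; exists lt; split => // x Sx; apply: IH; apply: hs.
Qed.
Arguments le_aleph_succ {n T S}.

Lemma le_aleph_mono m n T (S : set T) : (m <= n)%N -> le_aleph m S -> le_aleph n S.
Proof.
elim: n => [|n IH]; first by rewrite leqn0 => /eqP ->.
rewrite leq_eqVlt => /orP [/eqP -> //|]; rewrite ltnS => mn hm.
by apply: le_aleph_succ; apply: IH.
Qed.

Lemma wo_sum T (S1 S2 : set T) lt1 lt2 :
  strict_wellorder S1 lt1 -> strict_wellorder S2 lt2 ->
  exists lt, strict_wellorder (S1 `|` S2) lt /\
   forall y, (S1 `|` S2) y ->
     (S1 y /\ segment (S1 `|` S2) lt y `<=` segment S1 lt1 y) \/
     (~ S1 y /\ S2 y /\ segment (S1 `|` S2) lt y `<=` S1 `|` segment S2 lt2 y).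
Proof.
move=> [a1 a2 a3 a4] [b1 b2 b3 b4].
exists (fun x y => (S1 x /\ S1 y /\ lt1 x y) \/ (S1 x /\ ~ S1 y) \/
                   (~ S1 x /\ ~ S1 y /\ lt2 x y)).
have S2of x : (S1 `|` S2) x -> ~ S1 x -> S2 x by case.
split; first split.
- move=> x Ux [[s1 [_ l]]|[[s1 ns1]|[ns1 [_ l]]]].
  + exact: a1 l.
  + exact: ns1 s1.
  + exact: b1 (S2of x Ux ns1) l.
- move=> x y z Ux Uy Uz
    [[sx [sy l]]|[[sx nsy]|[nsx [nsy l]]]] [[sy' [sz l']]|[[sy' nsz]|[nsy' [nsz l']]]];
    try (exfalso; tauto).
  + by left; split => //; split => //; apply: a2 l l'.
  + by right; left.
  + by right; left.
  + right; right; split => //; split => //.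
    exact: b2 (S2of x Ux nsx) (S2of y Uy nsy) (S2of z Uz nsz) l l'.
- move=> x y Ux Uy.
  have [sx|nsx] := pselect (S1 x); have [sy|nsy] := pselect (S1 y).
  + case: (a3 x y sx sy) => [e|l|l]; [exact: Or31|apply: Or32|apply: Or33]; by left.
  + by apply: Or32; right; left.
  + by apply: Or33; right; left.
  + case: (b3 x y (S2of x Ux nsx) (S2of y Uy nsy)) => [e|l|l];
      [exact: Or31|apply: Or32|apply: Or33]; by right; right.
- move=> A AU [a0 Aa0].
  have [[a [Aa s1a]]|nA1] := pselect (exists a, A a /\ S1 a).
    have [m [Am s1m] mmin] := a4 (A `&` S1) (fun x (h : (A `&` S1) x) => proj2 h) (ex_intro _ a (conj Aa s1a)).
    exists m => // x Ax [[s1x [_ l]]|[[_ h]|[_ [h _]]]].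
    + exact: mmin _ (conj Ax s1x) l.
    + exact: h s1m.
    + exact: h s1m.
  have AS2 : A `<=` S2.
    by move=> x Ax; apply: S2of (AU _ Ax) _ => s1x; apply: nA1; exists x.
  have [m Am mmin] := b4 A AS2 (ex_intro _ a0 Aa0).
  exists m => // x Ax [[s1x _]|[[s1x _]|[_ [_ l]]]].
  + by apply: nA1; exists x.
  + by apply: nA1; exists x.
  + exact: mmin Ax l.
- move=> y Uy; have [sy|nsy] := pselect (S1 y).
    left; split => // x [Ux [[s1x [_ l]]|[[_ h]|[_ [h _]]]]];
      [by split | by exfalso; apply: h | by exfalso; apply: h].
  right; split => //; split; first exact: S2of.
  move=> x [Ux [[_ [h _]]|[[s1x _]|[nsx [_ l]]]]].
  + by exfalso; apply: nsy.
  + by left.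
  + by right; split => //; apply: S2of.
Qed.

Lemma countableU T (A B : set T) : countable A -> countable B -> countable (A `|` B).
Proof.
move=> cA cB.
have : countable (\bigcup_(b in [set: bool]) (if b then A else B)).
  by apply: bigcup_countable => // -[].
apply: sub_countable; apply: subset_card_le => x [Ax|Bx]; by [exists true | exists false].
Qed.

Lemma le_aleph_U0 a : forall T (S1 S2 : set T),
  le_aleph a S1 -> countable S2 -> le_aleph a.+1 (S1 `|` S2).
Proof.
elim: a => [|k IH] T S1 S2.
  by move=> c1 c2; apply: le_aleph_succ; apply: countableU.
move=> [lt1 [wo1 hs1]] c2; have [lt2 wo2] := countable_wo c2.
have [lt [wo hs]] := wo_sum wo2 wo1.
exists lt; rewrite setUC; split => // y Uy.
case: (hs y Uy) => [[s2y sub]|[ns2y [s1y sub]]].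
  apply: (le_aleph_sub sub); apply: (@le_aleph_mono 0) => //.
  by apply: sub_countable c2; apply: subset_card_le => z [].
apply: (le_aleph_sub sub); rewrite setUC; apply: IH => //.
exact: hs1.
Qed.

Lemma le_aleph_U a b : forall T (S1 S2 : set T),
  le_aleph a S1 -> le_aleph b S2 -> le_aleph (a + b).+1 (S1 `|` S2).
Proof.
elim: b => [|c IH] T S1 S2.
  by rewrite addn0; apply: le_aleph_U0.
move=> h1 [lt2 [wo2 hs2]].
have : le_aleph (a + c.+1).+1 S1.
  by apply: (le_aleph_mono _ h1); rewrite -addnS leq_addr.
move=> [lt1 [wo1 hs1]].
have [lt [wo hs]] := wo_sum wo1 wo2.
exists lt; split => // y Uy.
case: (hs y Uy) => [[s1y sub]|[ns1y [s2y sub]]].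
  by apply: (le_aleph_sub sub); apply: hs1.
apply: (le_aleph_sub sub); rewrite addnS; apply: IH => //.
exact: hs2.
Qed.

Lemma lao_sub T (S S' : set T) : S' `<=` S -> lt_aleph_omega S -> lt_aleph_omega S'.
Proof. by move=> sub [n h]; exists n; apply: le_aleph_sub h. Qed.

Lemma lao_image T U (S : set T) (f : T -> U) :
  lt_aleph_omega S -> lt_aleph_omega (f @` S).
Proof. by move=> [n h]; exists n; apply: le_aleph_image. Qed.

Lemma lao_U T (S1 S2 : set T) :
  lt_aleph_omega S1 -> lt_aleph_omega S2 -> lt_aleph_omega (S1 `|` S2).
Proof. by move=> [a h1] [b h2]; exists (a + b).+1; apply: le_aleph_U. Qed.

Lemma lao_finU T (F : nat -> set T) n : (forall i, lt_aleph_omega (F i)) ->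
  lt_aleph_omega [set x | exists2 i, (i < n)%N & F i x].
Proof.
move=> hF; elim: n => [|n IH].
  by exists 0%N; apply: (le_aleph_sub (S := set0)); [move=> x [] | exact: countable0].
apply: (lao_sub (S := [set x | exists2 i, (i < n)%N & F i x] `|` F n)).
  move=> x [i]; rewrite ltnS leq_eqVlt => /orP [/eqP -> |lin] Fx; first by right.
  by left; exists i.
exact: lao_U.
Qed.

Lemma lAo_sub T (S S' : set T) : S' `<=` S -> le_aleph_omega S -> le_aleph_omega S'.
Proof.
move=> sub [lt [wo hs]]; exists lt; split; first exact: wo_sub wo.
by move=> x S'x; exact: (lao_sub (seg_sub sub) (hs x (sub x S'x))).
Qed.

Lemma lAo_image T U (S : set T) (f : T -> U) :
  le_aleph_omega S -> le_aleph_omega (f @` S).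
Proof.
move=> [lt [wo hs]]; have [lt' [wo' hseg]] := wo_image f wo.
exists lt'; split => // y Hy; have [x Sx sub] := hseg y Hy.
by apply: (lao_sub sub); apply: lao_image; apply: hs.
Qed.

Lemma lAo_natU T (F : nat -> set T) : (forall i, lt_aleph_omega (F i)) ->
  le_aleph_omega [set x | exists i, F i x].
Proof.
move=> hF.
have ltF : forall i, {lt : T -> T -> Prop | strict_wellorder (F i) lt /\
     forall x, F i x -> lt_aleph_omega (segment (F i) lt x)}.
  move=> i; apply: cid; have [k hk] := hF i.
  have [lt [wo hs]] : le_aleph k.+1 (F i) by apply: le_aleph_succ.
  by exists lt; split => // x Fx; exists k; apply: hs.
pose lt_ i := proj1_sig (ltF i).
have wo_ i : strict_wellorder (F i) (lt_ i) by case: (proj2_sig (ltF i)).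
have hs_ i x : F i x -> lt_aleph_omega (segment (F i) (lt_ i) x).
  by case: (proj2_sig (ltF i)) => _; apply.
pose rank x := match pselect (exists i, F i x) with
  | left h => proj1_sig (cid h) | right _ => 0%N end.
have rankP x : (exists i, F i x) -> F (rank x) x.
  move=> h; rewrite /rank; case: pselect => [h'|nh]; last by exfalso.
  exact: (proj2_sig (cid h')).
exists (fun x y => (rank x < rank y)%N \/ (rank x = rank y /\ lt_ (rank x) x y)).
split; first split.
- move=> x Ux [l|[_ l]]; first by rewrite ltnn in l.
  by case: (wo_ (rank x)) => h1 _ _ _; apply: h1 (rankP x Ux) l.
- move=> x y z Ux Uy Uz [l|[e l]] [l'|[e' l']].
  + by left; apply: ltn_trans l l'.
  + by left; rewrite -e'.
  + by left; rewrite e.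
  + right; split; first by rewrite e e'.
    case: (wo_ (rank x)) => _ h2 _ _; apply: h2 l _ => //.
    * exact: rankP.
    * by rewrite e; apply: rankP.
    * by rewrite e e'; apply: rankP.
    * by rewrite e.
- move=> x y Ux Uy; case: (ltngtP (rank x) (rank y)) => h.
  + by apply: Or32; left.
  + by apply: Or33; left.
  + case: (wo_ (rank x)) => _ _ h3 _.
    have Fy : F (rank x) y by rewrite h; apply: rankP.
    case: (h3 x y (rankP x Ux) Fy) => [e|l|l]; first exact: Or31.
      by apply: Or32; right.
    by apply: Or33; right; split => //; rewrite -h.
- move=> A AU [a0 Aa0].
  have [m [[a [Aa ra]] mmin]] := @nat_min (fun n => exists a, A a /\ rank a = n)
    (ex_intro _ (rank a0) (ex_intro _ a0 (conj Aa0 erefl))).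
  case: (wo_ m) => _ _ _ h4.
  have sub : [set b | A b /\ rank b = m] `<=` F m.
    by move=> b [Ab <-]; apply: rankP; apply: AU.
  have [b [Ab rb] bmin] := h4 _ sub (ex_intro _ a (conj Aa ra)).
  exists b => // x Ax [l|[e l]].
    by move: l; rewrite rb ltnNge (mmin (rank x)) //; exists x.
  by apply: (bmin x (conj Ax _)); [rewrite e rb | rewrite -rb -e].
- move=> y Uy.
  apply: (lao_sub (S := [set x | exists2 i, (i < rank y)%N & F i x] `|`
                         segment (F (rank y)) (lt_ (rank y)) y)).
    move=> x [Ux] /= [l|[e l]]; first by left; exists (rank x) => //; apply: rankP.
    by right; split; [rewrite -e; apply: rankP | rewrite -e].
  apply: lao_U; first exact: lao_finU.
  by apply: hs_; apply: rankP.
Qed.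

Lemma le_aleph_card_le n T U (A : set T) (B : set U) :
  A #<= B -> le_aleph n B -> le_aleph n A.
Proof.
move=> /card_leP [f] hB.
have [[a0 Aa0]|nA] := pselect (exists x, A x); last first.
  by apply: (le_aleph_sub (S := set0)); [move=> x Ax; apply: nA; exists x | exact: le_aleph_set0].
have [[b0 Bb0]|nB] := pselect (exists y, B y); last first.
  by exfalso; apply: nB; exists (val (f (SigSub (mem_set Aa0)))); apply: set_mem (valP _).
pose g (a : A) : U := val (f a).
have ginj : injective g.
  move=> x y /val_inj e; apply: (@inj _ _ _ f) => //; exact: in_setT.
pose A0 : A := SigSub (mem_set Aa0).
pose h u : A := match pselect (exists a, g a = u) with
  | left e => proj1_sig (cid e) | right _ => A0 end.
have hg a : h (g a) = a.
  rewrite /h; case: pselect => [e|ne]; last by exfalso; apply: ne; exists a.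
  by apply: ginj; exact: (proj2_sig (cid e)).
have hT : le_aleph n [set: A].
  apply: (le_aleph_sub (S := h @` B)); last exact: le_aleph_image.
  move=> a _; exists (g a); last exact: hg.
  exact: set_mem (valP (f a)).
apply: (le_aleph_sub (S := val @` [set: A])); last exact: le_aleph_image.
by move=> x Ax; exists (SigSub (mem_set Ax)).
Qed.
Unset Implicit Arguments.
Section Top.
Variables (X : nat -> topologicalType) (pi : forall n, X n.+1 -> X n).
Hypothesis pi_cont : forall n, continuous (pi n).
Local Notation L := (invlim pi).

Lemma setval_cont : continuous (set_val : L -> prod_topology X).
Proof. exact: initial_continuous. Qed.

Lemma iproj_cont n : continuous (@invlim_proj X pi n).
Proof.
move=> x; apply: (@continuous_comp _ (prod_topology X) _ set_val (fun f => f n)).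
  exact: initial_continuous.
exact: (@proj_continuous nat X n).
Qed.

Lemma thread (x : L) n : pi n (invlim_proj n.+1 x) = invlim_proj n x.
Proof. rewrite /invlim_proj set_valE; exact: (set_valP x n). Qed.

Lemma thread_bond0 (x : L) n : bond0 pi n (invlim_proj n x) = invlim_proj 0 x.
Proof. by elim: n => [//|n IH] /=; rewrite thread. Qed.

Lemma thread_down (x y : L) n m : (n <= m)%N ->
  invlim_proj m x = invlim_proj m y -> invlim_proj n x = invlim_proj n y.
Proof.
elim: m => [|m IH].
  by rewrite leqn0 => /eqP ->.
rewrite leq_eqVlt => /orP [/eqP -> //|]; rewrite ltnS => nm e.
by apply: IH => //; rewrite -(thread x) -(thread y) e.
Qed.

Lemma open_setT_preim (B : set L) :
  open B -> exists2 W : set (prod_topology X), open W & set_val @^-1` W = B.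
Proof. by move=> [W oW eW]; exists W. Qed.

Definition goodnb (x : L) : set_system (prod_topology X) := fun W =>
  exists N, exists V : set (X N), [/\ open V, V (invlim_proj N x) &
     forall y : prod_topology X, invlim_set pi y -> V (y N) -> W y].

Lemma goodnb_lift (x : L) W N (V : set (X N)) :
  [/\ open V, V (invlim_proj N x) &
     forall y : prod_topology X, invlim_set pi y -> V (y N) -> W y] ->
  forall M, (N <= M)%N -> exists V' : set (X M), [/\ open V', V' (invlim_proj M x) &
     forall y : prod_topology X, invlim_set pi y -> V' (y M) -> W y].
Proof.
move=> hV M; elim: M => [|M IH].
  rewrite leqn0 => /eqP e; move: V hV; rewrite e => V hV; by exists V.
rewrite leq_eqVlt => /orP [/eqP e|].
  move: V hV; rewrite e => V hV; by exists V.
rewrite ltnS => /IH [Vp [oVp Vpx hVp]].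
exists (pi M @^-1` Vp); split.
- by apply: open_comp => // z _; apply: pi_cont.
- by rewrite /= thread.
- by move=> y ty /= Vy; apply: hVp => //; rewrite -ty.
Qed.

Lemma goodnb_filter (x : L) : Filter (goodnb x).
Proof.
constructor.
- exists 0%N, setT; split => //; exact: openT.
- move=> P1 P2 [N1 [V1 h1]] [N2 [V2 h2]].
  have [V3 [oa va hha]] := goodnb_lift _ _ _ _ h1 _ (leq_maxl N1 N2).
  have [V4 [ob vb hhb]] := goodnb_lift _ _ _ _ h2 _ (leq_maxr N1 N2).
  exists (maxn N1 N2), (V3 `&` V4); split.
  + exact: openI.
  + by split.
  + by move=> y ty [a b]; split; [apply: hha | apply: hhb].
- move=> P Q PQ [N [V [oV Vx h]]]; exists N, V; split => // y ty Vy.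
  by apply: PQ; apply: h.
Qed.

Lemma goodnb_cvg (x : L) : goodnb x --> (set_val x : prod_topology X).
Proof.
have GF := goodnb_filter x.
apply/cvg_sup => i U; rewrite nbhsE => -[V [[W oW <-] Vx] VU].
exists i, W; split => //.
by move=> y ty Wy; apply: VU.
Qed.

Lemma key_nbhs (x : L) (U : set L) : nbhs x U ->
  exists N, exists V : set (X N), [/\ open V, V (invlim_proj N x) &
     forall y : L, V (invlim_proj N y) -> U y].
Proof.
rewrite nbhsE => -[B [oB Bx] BU].
have [W oW eW] := open_setT_preim _ oB.
have : nbhs (set_val x : prod_topology X) W.
  by apply: open_nbhs_nbhs; split => //; rewrite -eW in Bx.
move=> /goodnb_cvg [N [V [oV Vx h]]].
exists N, V; split => // y Vy; apply: BU; rewrite -eW /=.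
apply: h => //; have := set_valP y; rewrite set_valE //.
Qed.


Section Lift.
Variable d : forall i, X i.
Hypothesis pi_surj : forall n (y : X n), exists x : X n.+1, pi n x = y.

Fixpoint downs (k : nat) : X k -> forall i, X i :=
  match k as k0 return X k0 -> forall i, X i with
  | 0 => fun a => dfwith d 0 a
  | k'.+1 => fun a => dfwith (downs k' (pi k' a)) k'.+1 a
  end.

Lemma downs_self k a : downs k a k = a.
Proof. by case: k a => [|k] a /=; rewrite dfwithin. Qed.

Lemma downs_step k a j : (j <= k)%N -> downs k.+1 a j = downs k (pi k a) j.
Proof.
move=> jk /=; rewrite dfwithout //.
by apply/eqP => e; rewrite -e ltnn in jk.
Qed.

Lemma downs_pi k : forall a j, (j < k)%N -> pi j (downs k a j.+1) = downs k a j.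
Proof.
elim: k => [//|k IH] a j; rewrite ltnS leq_eqVlt => /orP [/eqP ->|jk].
  by rewrite downs_self downs_step // downs_self.
by rewrite !downs_step // ?IH // ltnW.
Qed.

Definition liftf n (z : X n) : X n.+1 := proj1_sig (cid (pi_surj n z)).
Lemma liftfK n z : pi n (liftf n z) = z.
Proof. exact: (proj2_sig (cid (pi_surj n z))). Qed.

Lemma lift_point N (y : X N) : exists x : L, invlim_proj N x = y.
Proof.
pose up := fix up (k : nat) : X (k + N) :=
  match k as k0 return X (k0 + N) with
  | 0 => y
  | k'.+1 => liftf (k' + N) (up k')
  end.
pose xf : prod_topology X := fun i => downs (i + N) (up i) i.
have tx : invlim_set pi xf.
  move=> i; rewrite /xf.
  rewrite downs_pi; last by rewrite ltnS leq_addr.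
  change (up i.+1) with (liftf (i + N) (up i)).
  rewrite (downs_step (i + N)) ?leq_addr //.
  by rewrite liftfK.
have upN k : downs (k + N) (up k) N = y.
  elim: k => [|k IH]; first exact: downs_self.
  change (downs (k + N).+1 (liftf (k + N) (up k)) N = y).
  by rewrite downs_step ?leq_addl // liftfK.
exists (exist _ xf (mem_set tx)).
by rewrite /invlim_proj set_valE /=; apply: upN.
Qed.
End Lift.

Section CH.
Hypothesis X_compact : forall n, compact [set: X n].
Hypothesis X_hausdorff : forall n, hausdorff_space (X n).

Lemma invlim_closed : closed (invlim_set pi : set (prod_topology X)).
Proof.
have -> : (invlim_set pi : set (prod_topology X)) =
    \bigcap_(n in [set: nat]) [set y : prod_topology X | pi n (y n.+1) = y n].
  by apply/seteqP; split => y; [move=> ty n _ | move=> ty n]; [apply: ty | apply: ty].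
apply: closed_bigI => n _; rewrite closedE => y nn; apply: contrapT => neq.
apply: nn.
have neq' : pi n (y n.+1) != y n by apply/eqP.
move: (X_hausdorff n); rewrite open_hausdorff => hh.
have [[A B] /= [/set_mem Ay /set_mem By] [oA oB /eqP AB0]] := hh _ _ neq'.
have c1 : continuous (fun z : prod_topology X => pi n (z n.+1)).
  move=> z; apply: (@continuous_comp _ _ _ (fun z : prod_topology X => z n.+1) (pi n)).
    exact: (@proj_continuous nat X n.+1).
  exact: pi_cont.
have c2 : continuous (fun z : prod_topology X => z n).
  exact: (@proj_continuous nat X n).
have hA : nbhs y [set z : prod_topology X | A (pi n (z n.+1))].
  by apply: c1; apply: open_nbhs_nbhs.
have hB : nbhs y [set z : prod_topology X | B (z n)].
  by apply: c2; apply: open_nbhs_nbhs.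
apply: filterS (filterI hA hB) => z [Az Bz] e.
have : (A `&` B) (z n) by split => //; rewrite -e.
by rewrite AB0.
Qed.

Lemma invlim_compact : compact [set: L].
Proof.
move=> F PF _.
have Kc : compact (invlim_set pi : set (prod_topology X)).
  apply: (subclosed_compact invlim_closed (B := [set: prod_topology X])) => //.
  have := @tychonoff nat X (fun i => [set: X i]) X_compact.
  by rewrite (_ : [set f : forall i, X i | forall i, [set: X i] (f i)] = setT) //;
    apply/seteqP; split.
have GF : ProperFilter (set_val @ F) := fmap_proper_filter set_val PF.
have GK : (set_val @ F) (invlim_set pi).
  apply: (@filterS _ F _ setT); last exact: (@filterT _ F _).
  by move=> z _ /=; have := set_valP z; rewrite set_valE.
have [q [Kq clq]] := Kc (set_val @ F) GF GK.
exists (exist _ q (mem_set Kq)); split => //.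
move=> A B FA nB.
have [U [oU Uq] UB] : exists2 U, open_nbhs (exist _ q (mem_set Kq) : L) U & U `<=` B.
  by move: nB; rewrite nbhsE.
have [W oW eW] := open_setT_preim _ oU.
have nW : nbhs q W.
  apply: open_nbhs_nbhs; split => //; rewrite -eW in Uq.
  by move: Uq; rewrite /= set_valE.
have GA : (set_val @ F) (set_val @` A).
  apply: (@filterS _ F _ A); last exact: FA.
  by move=> a Aa /=; exists a.
have [_ [[a Aa <-] Wa]] := clq _ _ GA nW.
exists a; split => //; apply: UB; rewrite -eW //.
Qed.

Lemma invlim_hausdorff : hausdorff_space L.
Proof.
have hP : hausdorff_space (prod_topology X).
  exact: (@hausdorff_product nat X X_hausdorff).
move=> x y cxy; apply: val_inj.
have : set_val x = set_val y; last by rewrite set_valE.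
apply: hP => A B nA nB.
have nA' : nbhs x (set_val @^-1` A) by apply: setval_cont.
have nB' : nbhs y (set_val @^-1` B) by apply: setval_cont.
have [z [Az Bz]] := cxy _ _ nA' nB'.
by exists (set_val z).
Qed.
End CH.
End Top.
Section Main.
Variables (X : nat -> topologicalType) (pi : forall n, X n.+1 -> X n).
Hypothesis X_compact : forall n, compact [set: X n].
Hypothesis X_hausdorff : forall n, hausdorff_space (X n).
Hypothesis pi_cont : forall n, continuous (pi n).
Hypothesis pi_surj : forall n (y : X n), exists x : X n.+1, pi n x = y.
Variable p : invlim pi.
Hypothesis hA : forall n, weak_P_aleph_point n (invlim_proj n p).
Hypothesis hB : forall n, weight_lt_aleph_omega (X n).
Hypothesis hC : forall n, nowhere_dense (bond0 pi n @^-1` [set invlim_proj 0 p]).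
Local Notation L := (invlim pi).

Lemma escape (U : set L) : nbhs p U ->
  exists x : L, U x /\ invlim_proj 0 x <> invlim_proj 0 p.
Proof.
move=> /(key_nbhs X pi pi_cont) [N [V [oV Vp hV]]].
have [z [Vz bz]] : exists z, V z /\ bond0 pi N z <> invlim_proj 0 p.
  apply: contrapT => nz.
  have sub : V `<=` closure (bond0 pi N @^-1` [set invlim_proj 0 p]).
    move=> z Vz; apply: subset_closure => /=.
    by apply: contrapT => nb; apply: nz; exists z.
  have : interior (closure (bond0 pi N @^-1` [set invlim_proj 0 p])) (invlim_proj N p).
    by apply: (filterS sub); apply: open_nbhs_nbhs.
  by rewrite (hC N).
have [x xN] := lift_point X pi (fun i => invlim_proj i p) pi_surj N z.
exists x; split; first by apply: hV; rewrite xN.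
by rewrite -(thread_bond0 X pi x N) xN.
Qed.

Lemma not_lao_local_base (B : set (set L)) : local_base p B -> ~ lt_aleph_omega B.
Proof.
move=> [Bo Bl] [n hn].
pose xf (U : set L) : L := match pselect (exists x : L, U x /\ invlim_proj 0 x <> invlim_proj 0 p) with
  | left h => proj1_sig (cid h) | right _ => p end.
have xfP U : B U -> U (xf U) /\ invlim_proj 0 (xf U) <> invlim_proj 0 p.
  move=> BU; rewrite /xf; case: pselect => [h|nh].
    exact: (proj2_sig (cid h)).
  by exfalso; apply: nh; apply: escape; apply: open_nbhs_nbhs; apply: Bo.
pose A := (fun U => invlim_proj n.+1 (xf U)) @` B.
apply: (hA n.+1 A).
- move=> _ [U BU <-] /= e; case: (xfP U BU) => _; apply.
  by rewrite -(thread_bond0 X pi (xf U) n.+1) -(thread_bond0 X pi p n.+1) e.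
- exact: le_aleph_image.
- move=> W nW.
  have : nbhs p (invlim_proj n.+1 @^-1` W) by apply: iproj_cont.
  move=> /Bl [V BV VW]; exists (invlim_proj n.+1 (xf V)); split.
    by exists V.
  by apply: VW; case: (xfP V BV).
Qed.

Lemma basis_local (B : set (set L)) : basis B -> local_base p [set U | B U /\ U p].
Proof.
move=> [Bo Bc]; split; first by move=> U [BU Up]; split => //; apply: Bo.
move=> U nU; have [V [BV Vp] VU] := Bc p U nU.
by exists V.
Qed.


Lemma main_basis : exists2 BB : set (set L), basis BB & le_aleph_omega BB.
Proof.
have Bn n : {B : set (set (X n)) | basis B & lt_aleph_omega B}.
  by apply: cid2; apply: hB.
pose F n : set (set L) := (fun V => @invlim_proj X pi n @^-1` V) @` proj1_sig (Bn n).
exists [set U | exists n, F n U]; last first.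
  by apply: lAo_natU => n; apply: lao_image; case: (proj2_sig (Bn n)).
split.
  move=> _ [n [V BV <-]]; apply: open_comp.
    by move=> z _; apply: iproj_cont.
  by case: (proj2_sig (Bn n)) => -[+ _] _; apply.
move=> x W nW; have [N [V [oV Vx hV]]] := key_nbhs X pi pi_cont x W nW.
case: (proj2_sig (Bn N)) => -[_ bc] _.
have : nbhs (invlim_proj N x) V by apply: open_nbhs_nbhs.
move=> /bc [V' [BV' V'x] V'V].
exists (invlim_proj N @^-1` V'); first by split => //; exists N; exists V'.
by move=> y /V'V; apply: hV.
Qed.

Lemma main_character : character_is_aleph_omega p.
Proof.
split; last exact: not_lao_local_base.
have [BB bBB hBB] := main_basis.
exists [set U | BB U /\ U p]; first exact: basis_local.
by apply: (lAo_sub _ hBB) => U [].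
Qed.

Lemma main_weight : weight_is_aleph_omega L.
Proof.
split; first exact: main_basis.
move=> B bB hl; apply: (not_lao_local_base _ (basis_local _ bB)).
by apply: (lao_sub _ hl) => U [].
Qed.

Lemma ne_coord (x : L) : x <> p -> exists n, invlim_proj n x <> invlim_proj n p.
Proof.
move=> nxp; apply: contrapT => nn; apply: nxp; apply: val_inj.
have : set_val x = set_val p; last by rewrite set_valE.
apply: functional_extensionality_dep => n; apply: contrapT => ne.
by apply: nn; exists n.
Qed.

Lemma main_kappa (K : Type) (lt : K -> K -> Prop) :
  regular_uncountable_cardinal lt ->
  forall f : K -> L, (forall k, f k <> p) -> ~ wo_seq_converges lt f p.
Proof.
move=> [[w1 w2 w3 w4] unc init reg] f fne conv.
have asym a b : lt a b -> ~ lt b a.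
  by move=> l l'; apply: (w1 a) => //; apply: (w2 a b a).
pose A n := [set k | invlim_proj n (f k) <> invlim_proj n p].
have [n cofA] : exists n, forall k, exists2 a, A n a & ~ lt a k.
  apply: contrapT => ncof.
  have bnd n : exists b, forall a, A n a -> lt a b.
    apply: contrapT => nb; apply: ncof; exists n => k.
    apply: contrapT => nk; apply: nb; exists k => a Aa.
    by apply: contrapT => nl; apply: nk; exists a.
  pose b n := proj1_sig (cid (bnd n)).
  have bP n a : A n a -> lt a (b n) by apply: (proj2_sig (cid (bnd n))).
  have cof : forall k, exists2 a, range b a & ~ lt a k.
    move=> k; have [m hm] := ne_coord (f k) (fne k).
    by exists (b m); [exists m | apply: asym; apply: bP].
  apply: unc; apply: (card_le_trans (reg _ cof)).
  exact: card_image_le.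
have [[j hj]|nK] := pselect (lt_aleph_omega [set: K]).
  pose m := (n + j).+1.
  apply: (hA m ((fun k => invlim_proj m (f k)) @` A n)).
  - move=> _ [k Ak <-] /= e; apply: Ak.
    by apply: (thread_down X pi _ _ n m) => //; rewrite /m ltnW // ltnS leq_addr.
  - rewrite /m /=; apply: le_aleph_image.
    apply: (le_aleph_sub (S := [set: K])) => //.
    exact: (le_aleph_mono (leq_addl n j) hj).
  - move=> W nW.
    have : nbhs p (invlim_proj m @^-1` W) by apply: iproj_cont.
    move=> /conv [k0 hk0]; have [a Aa nla] := cofA k0.
    exists (invlim_proj m (f a)); split; first by exists a.
    exact: hk0.
have [k0 _] : exists k : K, True.
  apply: contrapT => nk; apply: unc; apply: (sub_countable (B := @set0 nat)) => //.
  by rewrite (_ : [set: K] = set0) //; apply/seteqP; split => k // _; apply: nk; exists k.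
have [Bn bBn [j hj]] := hB n.
pose LB := [set V | Bn V /\ V (invlim_proj n p)].
have nV V : LB V -> nbhs p (invlim_proj n @^-1` V).
  move=> [BV Vp]; apply: iproj_cont; apply: open_nbhs_nbhs; split => //.
  by case: bBn => + _; apply.
pose kf V := match pselect (exists k0, forall k, ~ lt k k0 -> (invlim_proj n @^-1` V) (f k)) with
  | left h => proj1_sig (cid h) | right _ => k0 end.
have kfP V : LB V -> forall k, ~ lt k (kf V) -> V (invlim_proj n (f k)).
  move=> LV; rewrite /kf; case: pselect => [h|nh].
    exact: (proj2_sig (cid h)).
  by exfalso; apply: nh; apply: conv; apply: nV.
have [ccof|nccof] := pselect (forall k, exists2 a, (kf @` LB) a & ~ lt a k).
  apply: nK; exists j; apply: (le_aleph_card_le (reg _ ccof)).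
  apply: le_aleph_image; apply: (le_aleph_sub (S := Bn)) => //.
  by move=> V [].
have [k1 hk1] : exists k1, forall c, (kf @` LB) c -> lt c k1.
  apply: contrapT => nb; apply: nccof => k.
  apply: contrapT => nk; apply: nb; exists k => c Cc.
  by apply: contrapT => nl; apply: nk; exists c.
have [a Aa nla] := cofA k1.
have inall V : LB V -> V (invlim_proj n (f a)).
  move=> LV; apply: kfP => // l; apply: nla.
  by apply: (w2 a (kf V) k1) => //; apply: hk1; exists V.
have neq : invlim_proj n (f a) != invlim_proj n p by apply/eqP.
move: (X_hausdorff n); rewrite open_hausdorff => hh.
have [[U1 U2] /= [/set_mem U1a /set_mem U2p] [oUa oUb /eqP U0]] := hh _ _ neq.
case: bBn => _ bc.
have : nbhs (invlim_proj n p) U2 by apply: open_nbhs_nbhs.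
move=> /bc [V [BV Vp] VU2].
have : (U1 `&` U2) (invlim_proj n (f a)).
  by split => //; apply: VU2; apply: inall.
by rewrite U0.
Qed.
End Main.

Theorem lemma2 (X : nat -> topologicalType) (pi : forall n, X n.+1 -> X n)
  (X_compact : forall n, compact [set: X n])
  (X_hausdorff : forall n, hausdorff_space (X n))
  (pi_cont : forall n, continuous (pi n))
  (pi_surj : forall n (y : X n), exists x : X n.+1, pi n x = y)
  (p : invlim pi)
  (hA : forall n, weak_P_aleph_point n (invlim_proj n p))
  (hB : forall n, weight_lt_aleph_omega (X n))
  (hC : forall n, nowhere_dense (bond0 pi n @^-1` [set invlim_proj 0 p])) :
  [/\ compact [set: invlim pi], hausdorff_space (invlim pi),
      character_is_aleph_omega p, weight_is_aleph_omega (invlim pi) &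
      forall (K : Type) (lt : K -> K -> Prop),
        regular_uncountable_cardinal lt ->
        forall f : K -> invlim pi, (forall k, f k <> p) ->
          ~ wo_seq_converges lt f p].
Proof.
split.
- by apply: invlim_compact.
- by apply: invlim_hausdorff.
- by apply: main_character.
- by apply: main_weight.
- by move=> K lt reg f fne; apply: main_kappa.
Qed.
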